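(* Let $\rho_z$ and $\rho_{z'}$ be the discounted state occupation measures of a fixed policy from initial states $z,z'\in\mathcal{S}$, let $R:\mathcal{S}\to\mathbb{R}^d$ be a bounded measurable function, and set $H=\big\|\int R(s)\,\rho_z(ds)\big\|$. Then \[ q:=\int\!\!\int R(s)^\top R(s')\,\rho_z(ds)\,\rho_{z'}(ds') \;\ge\; H\Big(H-2\,\|R\|_{\infty,2}\,\|\Delta_{z',z}\|_{\mathrm{TV}}\Big). \]
   Context: For a Markov decision process with state space $\mathcal{S}$, policy $\pi$, and discount factor $\gamma\in(0,1)$, the discounted state occupation measure from $z$ is $\rho_z(\cdot)=(1-\gamma)\sum_{t\ge0}\gamma^t\,\mathbb{P}(s_t\in\cdot\mid s_0=z,\pi)$ (a probability measure on $\mathcal{S}$). $\Delta_{z',z}=\rho_{z'}-\rho_z$ is a signed measure and $\|\Delta_{z',z}\|_{\mathrm{TV}}=\sup_B|\Delta_{z',z}(B)|$ is its total variation norm. $\|\cdot\|$ is the Euclidean norm, and $\|R\|_{\infty,2}=\sqrt{\sum_{i=1}^d\big(\sup_{s\in\mathcal{S}}|[R(s)]_i|\big)^2}$. *)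

(* Defs.v *)
From HB Require Import structures.
From mathcomp Require Import all_boot all_order all_algebra.
From mathcomp Require Import all_classical all_reals all_analysis.
Set Implicit Arguments. Unset Strict Implicit. Unset Printing Implicit Defensive.
Import Order.TTheory GRing.Theory Num.Theory.
Local Open Scope classical_set_scope.
Local Open Scope ring_scope.

(* n_step P pi t z B = P(s_t \in B | s_0 = z, pi)  (backward recursion) *)
Fixpoint n_step {dS dA} {S : measurableType dS} {A : measurableType dA}
  {R : realType} (P : R.-pker (S * A)%type ~> S) (pi : R.-pker S ~> A)
  (t : nat) (z : S) (B : set S) : \bar R :=
  match t with
  | 0%N => \d_z B
  | t'.+1 => (\int[pi z]_a \int[P (z, a)]_s (n_step P pi t' s B))%E
  end.

Definition occupation {dS dA} {S : measurableType dS} {A : measurableType dA}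
  {R : realType} (P : R.-pker (S * A)%type ~> S) (pi : R.-pker S ~> A)
  (gamma : R) (z : S) (B : set S) : \bar R :=
  (((1 - gamma)%:E) * \sum_(0 <= t <oo) ((gamma ^+ t)%:E * n_step P pi t z B))%E.

Definition is_occupation {dS dA} {S : measurableType dS} {A : measurableType dA}
  {R : realType} (P : R.-pker (S * A)%type ~> S) (pi : R.-pker S ~> A)
  (gamma : R) (z : S) (mu : probability S R) : Prop :=
  forall B, measurable B -> mu B = occupation P pi gamma z B.

Definition vec_integral {dS} {S : measurableType dS} {R : realType} {d : nat}
  (mu : probability S R) (Rf : S -> 'rV[R]_d) : 'rV[R]_d :=
  \row_i (\int[mu]_(s in setT) Rf s ord0 i)%R.

Definition euclid_norm {R : realType} {d : nat} (v : 'rV[R]_d) : R :=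
  Num.sqrt (\sum_i (v ord0 i) ^+ 2).

Definition sup2_norm {dS} {S : measurableType dS} {R : realType} {d : nat}
  (Rf : S -> 'rV[R]_d) : R :=
  Num.sqrt (\sum_i (sup [set `|Rf s ord0 i| | s in [set: S]]) ^+ 2).

Definition tv_norm {dS} {S : measurableType dS} {R : realType}
  (mu nu : probability S R) : R :=
  sup [set `|fine (mu B) - fine (nu B)| | B in [set B : set S | measurable B]].

(* Main.v *)
Require Import Defs.
From HB Require Import structures.
From mathcomp Require Import all_boot all_order all_algebra.
From mathcomp Require Import all_classical all_reals all_analysis.
From mathcomp Require Import ring lra.
Import Order.TTheory GRing.Theory Num.Theory.
Import numFieldNormedType.Exports.
Local Open Scope classical_set_scope.
Local Open Scope ring_scope.

Section aux.
Context {R : realType} {dS : measure_display} {S : measurableType dS}.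

Lemma bint (mu : {finite_measure set S -> \bar R}) (f : S -> R) (M : R) :
  measurable_fun setT f -> (forall s, `|f s| <= M) ->
  mu.-integrable setT (EFin \o f).
Proof.
move=> mf fM; apply: measurable_bounded_integrable => //.
  exact: fin_num_fun_lty (@fin_num_measure _ _ _ mu).
exists M; split; first by rewrite num_real.
move=> x Mx s _ /=; exact: (le_trans (fM s) (ltW Mx)).
Qed.

Lemma fine_prob (mu : probability S R) B : measurable B ->
  0 <= fine (mu B) <= 1.
Proof.
move=> mB; have f1 : mu B \is a fin_num by exact: fin_num_measure.
rewrite fine_ge0 ?measure_ge0 //=.
rewrite -lee_fin fineK //; exact: probability_le1.
Qed.

Lemma tv_ge (mu nu : probability S R) B : measurable B ->
  `|fine (mu B) - fine (nu B)| <= tv_norm mu nu.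
Proof.
move=> mB; apply: ub_le_sup; last by exists B.
exists 2 => _ [C mC <-].
have /andP[a1 a2] := fine_prob mu C mC.
have /andP[b1 b2] := fine_prob nu C mC.
rewrite ler_norml; apply/andP; split; lra.
Qed.

Lemma diff_bound (mu nu : probability S R) (f : S -> R) (M : R) : 0 <= M ->
  measurable_fun setT f -> (forall s, `|f s| <= M) ->
  `|(\int[mu]_(x in setT) f x) - (\int[nu]_(x in setT) f x)| <= 2 * M * tv_norm mu nu.
Proof.
move=> M0 mf fM.
pose chg := cadd (charge_of_finite_measure mu) (copp (charge_of_finite_measure nu)).
have [P [N hPN]] := Hahn_decomposition chg.
pose Jp := jordan_pos hPN.
pose Jn := jordan_neg hPN.
have key : forall A, measurable A -> (mu A + Jn A = nu A + Jp A)%E.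
  move=> A mA.
  have := jordan_decomp hPN mA.
  rewrite /chg /cadd /copp /cscale /charge_of_finite_measure /=.
  move=> h.
  have h' : (mu A + - nu A = Jp A + (-1)%:E * Jn A)%E by exact: h.
  clear h; move: h'.
  have f1 : mu A \is a fin_num by exact: fin_num_measure.
  have f2 : nu A \is a fin_num by exact: fin_num_measure.
  have f3 : Jp A \is a fin_num by exact: fin_num_measure.
  have f4 : Jn A \is a fin_num by exact: fin_num_measure.
  rewrite -(fineK f1) -(fineK f2) -(fineK f3) -(fineK f4).
  rewrite -EFinN -!EFinM -!EFinD.

  move=> [hh].
  congr EFin; lra.
have mT : measurable (setT : set S) by [].
have iJp := bint Jp f M mf fM.
have iJn := bint Jn f M mf fM.
have imu := bint mu f M mf fM.
have inu := bint nu f M mf fM.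
have eqI : (\int[measure_add mu Jn]_(x in setT) (f x)%:E =
            \int[measure_add nu Jp]_(x in setT) (f x)%:E)%E.
  apply: eq_measure_integral => A mA _.
  transitivity (mu A + Jn A)%E; first exact: measure_addE.
  rewrite (key A mA); symmetry; exact: measure_addE.
rewrite integral_measure_add // ?(measurable_int _ imu) // in eqI.
rewrite integral_measure_add // ?(measurable_int _ imu) // in eqI.
have fI : forall (m : {finite_measure set S -> \bar R}),
    (\int[m]_(x in setT) (f x)%:E)%E = (\int[m]_(x in setT) f x)%:E.
  move=> m; rewrite /Rintegral fineK //; exact: integrable_fin_num (bint m f M mf fM).
rewrite !fI -!EFinD in eqI; case: eqI => eqI.
have bJ : forall (m : {finite_measure set S -> \bar R}),
   `|\int[m]_(x in setT) f x| <= M * fine (m setT).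
  move=> m; apply: le_trans (le_normr_Rintegral mT (bint m f M mf fM)) _.
  rewrite -Rintegral_cst //.
  apply: le_Rintegral.
  - exact: mT.
  - exact: integrable_norm (bint m f M mf fM).
  - apply: (bint m _ `|M|); [exact: measurable_cst | move=> _; exact: lexx].
  - move=> x _; exact: fM.
have hP : fine (Jp setT) <= tv_norm mu nu.
  rewrite /Jp jordan_posE cjordan_posE /crestr0 mem_set // /crestr /=.
  have [[mP _] _ _ _] := hPN.
  rewrite setTI /cadd /copp /= fineB ?fin_num_measure //.
  exact: le_trans (ler_norm _) (tv_ge mu nu P mP).
have hN : fine (Jn setT) <= tv_norm mu nu.
  rewrite /Jn jordan_negE cjordan_negE /crestr0 mem_set // /crestr /=.
  have [_ [mN _] _ _] := hPN.
  rewrite setTI /cadd /copp /= fineN fineB ?fin_num_measure //.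
  apply: le_trans (tv_ge mu nu N mN); rewrite -normrN; exact: ler_norm.
have := bJ Jp; have := bJ Jn.
have := ler_wpM2l M0 hP; have := ler_wpM2l M0 hN.
move: (\int[mu]_(x in setT) f x) (\int[nu]_(x in setT) f x) eqI => a b eqI.
move: (\int[Jp]_(x in setT) f x) (\int[Jn]_(x in setT) f x) eqI => c e eqI.
move: (fine (Jp setT)) (fine (Jn setT)) => p n.
move=> h1 h2; rewrite !ler_norml => /andP[? ?] /andP[? ?]; apply/andP; split; nra.
Qed.

Lemma Rint_sum (m : {finite_measure set S -> \bar R}) (n : nat)
  (F : 'I_n -> S -> R) : (forall i, m.-integrable setT (EFin \o F i)) ->
  \int[m]_(x in setT) (\sum_i F i x) = \sum_i \int[m]_(x in setT) F i x.
Proof.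
move=> iF; rewrite /Rintegral.
under eq_integral do rewrite -sumEFin.
rewrite integral_sum //.
rewrite -EFin_sum_fine //= => i _; exact: integrable_fin_num (iF i).
Qed.

Lemma CS (n : nat) (a b : 'I_n -> R) :
  \sum_i a i * b i <= Num.sqrt (\sum_i a i ^+ 2) * Num.sqrt (\sum_i b i ^+ 2).
Proof.
set A := \sum_i a i ^+ 2; set B := \sum_i b i ^+ 2; set C := \sum_i a i * b i.
have L : 0 <= \sum_i \sum_j (a i * b j - a j * b i) ^+ 2.
  by apply: sumr_ge0 => i _; apply: sumr_ge0 => j _; exact: sqr_ge0.
have E : \sum_i \sum_j (a i * b j - a j * b i) ^+ 2 = 2 * (A * B - C ^+ 2).
  transitivity (\sum_i \sum_j (a i ^+ 2 * b j ^+ 2) + \sum_i \sum_j (b i ^+ 2 * a j ^+ 2)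
     - 2 * \sum_i \sum_j (a i * b i * (a j * b j))).
    rewrite -big_split /= mulr_sumr -sumrB; apply: eq_bigr => i _.
    rewrite -big_split /= mulr_sumr -sumrB; apply: eq_bigr => j _; ring.
  have e1 : \sum_i \sum_j (a i ^+ 2 * b j ^+ 2) = A * B.
    rewrite /A mulr_suml; apply: eq_bigr => i _; by rewrite mulr_sumr.
  have e2 : \sum_i \sum_j (b i ^+ 2 * a j ^+ 2) = B * A.
    rewrite /B mulr_suml; apply: eq_bigr => i _; by rewrite mulr_sumr.
  have e3 : \sum_i \sum_j (a i * b i * (a j * b j)) = C * C.
    rewrite {1}/C mulr_suml; apply: eq_bigr => i _; by rewrite mulr_sumr.
  rewrite e1 e2 e3; ring.
have A0 : 0 <= A by apply: sumr_ge0 => i _; exact: sqr_ge0.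
have B0 : 0 <= B by apply: sumr_ge0 => i _; exact: sqr_ge0.
rewrite -sqrtrM //.
have [C0|C0] := lerP C 0.
  apply: le_trans C0 _; exact: sqrtr_ge0.
rewrite -(ger0_norm (ltW C0)) -sqrtr_sqr ler_sqrt //; nra.
Qed.

End aux.

Theorem lemma1 (R : realType) (dS dA : measure_display)
  (S : measurableType dS) (A : measurableType dA)
  (P : R.-pker (S * A)%type ~> S) (pi : R.-pker S ~> A)
  (gamma : R) (hgamma : 0 < gamma < 1)
  (z z' : S) (rho_z rho_z' : probability S R)
  (hz : is_occupation P pi gamma z rho_z)
  (hz' : is_occupation P pi gamma z' rho_z')
  (d : nat) (Rf : S -> 'rV[R]_d)
  (Rmeas : forall i, measurable_fun [set: S] (fun s => Rf s ord0 i))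
  (Rbdd : exists M : R, forall s i, `|Rf s ord0 i| <= M) :
  let H := euclid_norm (vec_integral rho_z Rf) in
  let q := (\int[rho_z']_(s' in setT)
              (\int[rho_z]_(s in setT) (Rf s *m (Rf s')^T) ord0 ord0)%R)%R in
  q >= H * (H - 2 * sup2_norm Rf * tv_norm rho_z' rho_z).

Proof.
cbv zeta.
set H := euclid_norm (vec_integral rho_z Rf).
set q := Rintegral rho_z' _ _.
have [M hM] := Rbdd.
pose K i := sup [set `|Rf s ord0 i| | s in [set: S]].
have hK : forall s i, `|Rf s ord0 i| <= K i.
  move=> s i; apply: ub_le_sup; last by exists s.
  by exists M => _ [t _ <-].
have K0 : forall i, 0 <= K i by move=> i; exact: le_trans (normr_ge0 _) (hK z i).
pose v i := \int[rho_z]_(s in setT) Rf s ord0 i.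
pose w i := \int[rho_z']_(s in setT) Rf s ord0 i.
pose T := tv_norm rho_z' rho_z.
have T0 : 0 <= T.
  apply: le_trans (tv_ge rho_z' rho_z set0 measurable0); exact: normr_ge0.
have dvw : forall i, `|w i - v i| <= 2 * K i * T.
  move=> i; apply: diff_bound => //; by move=> s; exact: hK.
have iR : forall (m : {finite_measure set S -> \bar R}) i,
    m.-integrable setT (EFin \o (fun s => Rf s ord0 i)).
  move=> m i; exact: (bint m _ M (Rmeas i) (fun s => hM s i)).
have eq : q = \sum_i v i * w i.
  transitivity (\int[rho_z']_(s' in setT) (\sum_j v j * Rf s' ord0 j)).
    apply: eq_Rintegral => s' _.
    transitivity (\int[rho_z]_(s in setT) (\sum_j Rf s ord0 j * Rf s' ord0 j)).
      apply: eq_Rintegral => s _; rewrite !mxE; apply: eq_bigr => j _; rewrite mxE.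
      done.
    rewrite (Rint_sum rho_z d (fun j s => Rf s ord0 j * Rf s' ord0 j)).
      apply: eq_bigr => j _; rewrite RintegralZr //; exact: iR.
    move=> j; apply: (bint _ _ (M * `|Rf s' ord0 j|)).
      exact: (measurable_realfun.measurable_funM (Rmeas j) (measurable_cst _)).
    move=> s; rewrite normrM; apply: ler_wpM2r => //.
  rewrite (Rint_sum rho_z' d (fun j s' => v j * Rf s' ord0 j)).
    apply: eq_bigr => j _; rewrite RintegralZl //; exact: iR.
  move=> j; apply: (bint _ _ (`|v j| * M)).
    exact: (measurable_realfun.measurable_funM (measurable_cst _) (Rmeas j)).
  move=> s; rewrite normrM; apply: ler_wpM2l => //.
have eH : H ^+ 2 = \sum_i v i ^+ 2.
  rewrite /H /euclid_norm sqr_sqrtr; last by apply: sumr_ge0 => i _; exact: sqr_ge0.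
  by apply: eq_bigr => i _; rewrite /vec_integral mxE.
have H0 : 0 <= H by exact: sqrtr_ge0.
have cs := CS d (fun i => `|v i|) K.
rewrite /= in cs.
have eH2 : Num.sqrt (\sum_i `|v i| ^+ 2) = H.
  rewrite /H /euclid_norm; congr Num.sqrt; apply: eq_bigr => i _.
  by rewrite /vec_integral mxE real_normK // num_real.
rewrite eH2 -/(sup2_norm Rf) in cs.
have step : \sum_i (v i ^+ 2 - 2 * T * (`|v i| * K i)) <= \sum_i v i * w i.
  apply: ler_sum => i _.
  have := dvw i; have := K0 i.
  move: (v i) (w i) (K i) => a b k.
  rewrite ler_norml => k0 /andP[h1 h2].
  have [a0|a0] := lerP 0 a.
    rewrite ger0_norm //; nra.
  rewrite ltr0_norm //; nra.
rewrite sumrB -mulr_sumr -eH in step.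
rewrite eq; move: step cs T0 H0; rewrite -/T.
move: (sup2_norm Rf) (\sum_i `|v i| * K i) => k c.
nra.
Qed.
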